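(* Let $f\in C^1[0,1]$ with $f(0)=0$, $h:=f'$, $q$ satisfying (q), and fix $c>c^*$. For every $\varphi_0\in(0,1)$ there is a unique $\hat z_{\varphi_0}\in C[0,1]\cap C^1(0,1)$ with $\dot{\hat z}_{\varphi_0}(\varphi)=h(\varphi)-c-q(\varphi)/\hat z_{\varphi_0}(\varphi)$ and $\hat z_{\varphi_0}(\varphi)<0$ for $\varphi\in(0,1)$, and $\hat z_{\varphi_0}(\varphi_0)=z^*(\varphi_0)$. It satisfies $\hat z_{\varphi_0}(0)=0$ (so it solves $(P_c)$), $\hat z_{\varphi_0}<z^*$ on $(\varphi_0,1]$, and $\hat z_{\varphi_0}\ge z_\beta$ on $(0,1]$. Moreover, if $0<\varphi_1<\varphi_0<1$ then $\hat z_{\varphi_1}<\hat z_{\varphi_0}$ on $(0,1]$.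
   Context: Condition (q): $q\in C[0,1]$, $q>0$ on $(0,1)$, $q(0)=q(1)=0$, and $\limsup_{\varphi\to0^+}q(\varphi)/\varphi<+\infty$. For $c\in\mathbb R$, a solution of problem $(P_c)$ is a function $z\in C[0,1]\cap C^1(0,1)$ with $\dot z(\varphi)=h(\varphi)-c-q(\varphi)/z(\varphi)$ and $z(\varphi)<0$ for all $\varphi\in(0,1)$, and $z(0)=0$. $c^*$ denotes the real number such that $(P_c)$ has a solution with $z(1)=0$ iff $c\ge c^*$ (unique); $z^*$ is this solution for $c=c^*$. For $c>c^*$, $\beta(c)<0$ is the number such that, for $b<0$, $(P_c)$ has a solution with $z(1)=b$ iff $b\ge\beta(c)$ (unique); $z_\beta$ denotes the solution of $(P_c)$ with $z_\beta(1)=\beta(c)$. *)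

(* Defs.v *)
From Stdlib Require Import Reals.
From Coquelicot Require Import Coquelicot.
Open Scope R_scope.

Definition cont01 (g : R -> R) : Prop :=
  forall x, 0 <= x <= 1 ->
    filterlim g (within (fun y => 0 <= y <= 1) (locally x)) (locally (g x)).

Definition cond_q (q : R -> R) : Prop :=
  cont01 q /\ (forall x, 0 < x < 1 -> 0 < q x) /\ q 0 = 0 /\ q 1 = 0 /\
  (* limsup_{phi -> 0+} q(phi)/phi < +oo *)
  (exists M delta, 0 < delta /\ forall x, 0 < x < delta -> q x / x <= M).

(* z in C[0,1] ∩ C^1(0,1), z' = h - c - q/z and z < 0 on (0,1)
   (the derivative equals a continuous expression, so z is C^1 on (0,1)) *)
Definition ode_sol (h q : R -> R) (c : R) (z : R -> R) : Prop :=
  cont01 z /\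
  (forall x, 0 < x < 1 -> z x < 0) /\
  (forall x, 0 < x < 1 -> is_derive z x (h x - c - q x / z x)).

Definition solP (h q : R -> R) (c : R) (z : R -> R) : Prop :=
  ode_sol h q c z /\ z 0 = 0.

(* Main.v *)
Require Import Defs.
From Stdlib Require Import Reals Lra Lia ClassicalEpsilon Classical.
From Coquelicot Require Import Coquelicot.
Open Scope R_scope.


Definition cw (g : R -> R) (u v : R) : Prop :=
  forall x, u <= x <= v ->
    filterlim g (within (fun y => u <= y <= v) (locally x)) (locally (g x)).

Lemma cw_eps g u v x : cw g u v -> u <= x <= v -> forall eps, 0 < eps ->
  exists d, 0 < d /\ forall y, u <= y <= v -> Rabs (y - x) < d -> Rabs (g y - g x) < eps.
Proof.
  intros H Hx eps He.
  destruct (proj1 (filterlim_locally g (g x)) (H x Hx) (mkposreal eps He)) as [d Hd].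
  exists d. split. apply cond_pos. intros y Hy Hyx. exact (Hd y Hyx Hy).
Qed.

Lemma cw_of_eps g u v : (forall x, u <= x <= v -> forall eps, 0 < eps ->
  exists d, 0 < d /\ forall y, u <= y <= v -> Rabs (y - x) < d -> Rabs (g y - g x) < eps) -> cw g u v.
Proof.
  intros H x Hx. apply filterlim_locally. intros eps.
  destruct (H x Hx eps (cond_pos eps)) as [d [Hd Hd2]].
  exists (mkposreal d Hd). intros y Hy Hy2. exact (Hd2 y Hy2 Hy).
Qed.

Lemma cw_sub g u v u' v' : cw g u v -> u <= u' -> v' <= v -> cw g u' v'.
Proof.
  intros H. intros Hu Hv. apply cw_of_eps. intros x Hx eps He.
  destruct (cw_eps g u v x H ltac:(lra) eps He) as [d [Hd Hd2]].
  exists d; split; auto. intros y Hy Hyx. apply Hd2; auto; lra.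
Qed.

Lemma cw_plus f g u v : cw f u v -> cw g u v -> cw (fun t => f t + g t) u v.
Proof.
  intros Hf Hg x Hx. eapply filterlim_comp_2; [apply Hf; auto|apply Hg; auto|].
  exact (filterlim_plus (f x) (g x)).
Qed.

Lemma cw_mult f g u v : cw f u v -> cw g u v -> cw (fun t => f t * g t) u v.
Proof.
  intros Hf Hg x Hx. eapply filterlim_comp_2; [apply Hf; auto|apply Hg; auto|].
  exact (@filterlim_mult R_AbsRing (f x) (g x)).
Qed.

Lemma cw_comp (phi : R -> R) f u v : (forall y, continuous phi y) -> cw f u v ->
  cw (fun t => phi (f t)) u v.
Proof.
  intros Hp Hf x Hx. eapply filterlim_comp. apply Hf; auto. apply Hp.
Qed.

Lemma cw_cont g u v : (forall x, u <= x <= v -> continuous g x) -> cw g u v.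
Proof.
  intros H x Hx. eapply filterlim_filter_le_1. apply filter_le_within. apply H; auto.
Qed.

Lemma cw_const k u v : cw (fun _ => k) u v.
Proof. apply cw_cont. intros. apply continuous_const. Qed.

Lemma cw_id u v : cw (fun t => t) u v.
Proof. apply cw_cont. intros. apply continuous_id. Qed.

Lemma cw_ext f g u v : (forall t, f t = g t) -> cw f u v -> cw g u v.
Proof.
  intros He H x Hx. rewrite <- He. apply (filterlim_ext f g). auto. auto.
Qed.

Lemma cw_opp f u v : cw f u v -> cw (fun t => - f t) u v.
Proof.
  intros H. apply (cw_ext (fun t => (-1) * f t)). intros; ring.
  apply cw_mult; auto. apply cw_const.
Qed.

Lemma cw_minus f g u v : cw f u v -> cw g u v -> cw (fun t => f t - g t) u v.
Proof. intros. apply cw_plus; auto. apply cw_opp; auto. Qed.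

Lemma isd_plus f g x a b : is_derive f x a -> is_derive g x b -> is_derive (fun t => f t + g t) x (a + b).
Proof. intros. apply (is_derive_plus f g); auto. Qed.
Lemma isd_minus f g x a b : is_derive f x a -> is_derive g x b -> is_derive (fun t => f t - g t) x (a - b).
Proof. intros. apply (is_derive_minus f g); auto. Qed.
Lemma isd_mult f g x a b : is_derive f x a -> is_derive g x b -> is_derive (fun t => f t * g t) x (a * g x + f x * b).
Proof. intros. apply (is_derive_mult f g); auto. intros; apply Rmult_comm. Qed.
Lemma isd_const k x : is_derive (fun _ : R => k) x 0.
Proof. apply (@is_derive_const R_AbsRing R_NormedModule k). Qed.
Lemma isd_id (x:R) : is_derive (fun t : R => t) x 1.
Proof. apply (@is_derive_id R_AbsRing x). Qed.
Lemma isd_eq (f : R -> R) (x a b : R) : a = b -> is_derive f x a -> is_derive f x b.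
Proof. intros ->; auto. Qed.

Lemma deriv_sign (g : R -> R) (x l : R) : is_derive g x l -> g x = 0 -> l < 0 ->
  exists eta, 0 < eta /\ (forall r, x < r < x + eta -> g r < 0) /\ (forall r, x - eta < r < x -> 0 < g r).
Proof.
  intros Hd H0 Hl.
  apply is_derive_Reals in Hd.
  destruct (Hd (- l / 2) ltac:(lra)) as [d Hdd].
  exists d. split. apply cond_pos. split.
  - intros r Hr. specialize (Hdd (r - x) ltac:(apply Rgt_not_eq; lra) ltac:(rewrite Rabs_pos_eq; lra)).
    replace (x + (r - x)) with r in Hdd by ring. rewrite H0 in Hdd.
    apply Rabs_def2 in Hdd. destruct Hdd as [H1 H2].
    assert (g r / (r - x) < l / 2) by lra.
    assert (g r / (r - x) * (r - x) < 0).
    { apply Rmult_lt_reg_r with (/ (r - x)). apply Rinv_0_lt_compat; lra.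
      rewrite Rmult_0_l. field_simplify; [|lra]. 
      apply Rlt_trans with (l/2); [|lra]. unfold Rdiv in *. lra. }
    field_simplify in H3; lra.
  - intros r Hr. specialize (Hdd (r - x) ltac:(apply Rlt_not_eq; lra) ltac:(rewrite Rabs_left; lra)).
    replace (x + (r - x)) with r in Hdd by ring. rewrite H0 in Hdd.
    apply Rabs_def2 in Hdd. destruct Hdd as [H1 H2].
    assert (g r / (r - x) < l / 2) by lra.
    assert (0 < g r / (r - x) * (r - x)).
    { replace (g r / (r - x) * (r - x)) with ((- (g r / (r - x))) * (- (r - x))) by ring.
      apply Rmult_lt_0_compat; lra. }
    field_simplify in H3; lra.
Qed.

Lemma cw_le_pt g u v C x : u < v -> cw g u v -> u <= x <= v ->
  (forall y, u < y < v -> g y <= C) -> g x <= C.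
Proof.
  intros Huv Hc Hx H. destruct (Rle_or_lt (g x) C) as [|Hlt]; auto.
  destruct (cw_eps g u v x Hc Hx (g x - C) ltac:(lra)) as [d [Hd Hd2]].
  set (y := if Rlt_dec x ((u+v)/2) then x + Rmin d (v - u) / 4 else x - Rmin d (v-u) / 4).
  assert (Hm1 := Rmin_l d (v-u)). assert (Hm2 := Rmin_r d (v-u)).
  assert (Hm3 : 0 < Rmin d (v - u)) by (apply Rmin_pos; lra).
  assert (Hy : u < y < v /\ Rabs (y - x) < d).
  { unfold y; destruct (Rlt_dec x ((u+v)/2)).
    - split. lra. rewrite Rabs_pos_eq; lra.
    - apply Rnot_lt_le in n. split. lra. rewrite Rabs_left; lra. }
  specialize (Hd2 y ltac:(lra) (proj2 Hy)). specialize (H y (proj1 Hy)).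
  apply Rabs_def2 in Hd2. lra.
Qed.

Lemma barrier (g : R -> R) (u v : R) : u < v -> cw g u v -> g u <= 0 ->
  (forall x, u <= x < v -> g x = 0 -> exists l, l < 0 /\ is_derive g x l) ->
  forall y, u < y < v -> g y < 0.
Proof.
  intros Huv Hc Hu Hd y Hy.
  destruct (Rlt_or_le (g y) 0) as [|Hgy]; auto. exfalso.
  set (E := fun s => u <= s <= y /\ forall r, u < r <= s -> g r < 0).
  assert (HE : bound E). { exists y. intros s [Hs _]. lra. }
  assert (HE2 : exists s, E s). { exists u. split. lra. intros; lra. }
  destruct (completeness E HE HE2) as [t [Ht1 Ht2]].
  assert (Htu : u <= t). { apply Ht1. split. lra. intros; lra. }
  assert (Hty : t <= y). { apply Ht2. intros s [Hs _]; lra. }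
  assert (HA : forall r, u < r < t -> g r < 0).
  { intros r Hr. destruct (Rle_or_lt r u) as [|Hru]; [lra|].
    assert (exists s, E s /\ r < s) as [s [[Hs1 Hs2] Hrs]].
    { destruct (Classical_Prop.classic (exists s, E s /\ r < s)) as [|Hn]; auto.
      exfalso. assert (t <= r). { apply Ht2. intros s Hs. destruct (Rle_or_lt s r); auto.
      exfalso; apply Hn; eauto. } lra. }
    apply Hs2; lra. }
  assert (Htu' : u < t).
  { destruct (Rle_lt_or_eq_dec _ _ Htu) as [|Heq]; auto. exfalso.
    assert (exists eta, 0 < eta /\ forall r, u < r < u + eta -> g r < 0) as [eta [He Heta]].
    { destruct (Rlt_or_le (g u) 0) as [Hneg|Hz].
      - destruct (cw_eps g u v u Hc ltac:(lra) (- g u) ltac:(lra)) as [d [Hd0 Hd2]].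
        exists (Rmin d (v - u)). split. apply Rmin_pos; lra.
        intros r Hr. assert (Hm1 := Rmin_l d (v-u)). assert (Hm2 := Rmin_r d (v-u)).
        specialize (Hd2 r ltac:(lra) ltac:(rewrite Rabs_pos_eq; lra)). apply Rabs_def2 in Hd2. lra.
      - assert (g u = 0) by lra. destruct (Hd u ltac:(lra) H) as [l [Hl Hdl]].
        destruct (deriv_sign g u l Hdl H Hl) as [eta [He [H1 _]]]. eauto. }
    set (s := Rmin (u + eta/2) y).
    assert (Hs1 := Rmin_l (u + eta/2) y). assert (Hs2 := Rmin_r (u + eta/2) y). fold s in Hs1, Hs2.
    assert (u < s). { unfold s; apply Rmin_glb_lt; lra. }
    assert (E s). { split. lra. intros r Hr. apply Heta.
      split. lra. lra. }
    assert (s <= t) by (apply Ht1; auto). lra. }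
  assert (Hgt : g t <= 0).
  { apply Rnot_lt_le. intros Hpos.
    destruct (cw_eps g u v t Hc ltac:(lra) (g t) Hpos) as [d [Hd0 Hd2]].
    set (r := Rmax u (t - d/2) + (t - Rmax u (t - d / 2)) / 2).
    assert (Hm1 := Rmax_l u (t - d/2)). assert (Hm2 := Rmax_r u (t - d/2)).
    assert (Hm3 : Rmax u (t - d/2) < t). { apply Rmax_lub_lt; lra. }
    specialize (Hd2 r ltac:(unfold r; lra) ltac:(unfold r; rewrite Rabs_left; lra)).
    specialize (HA r ltac:(unfold r; lra)). apply Rabs_def2 in Hd2. lra. }
  assert (Hgt0 : g t = 0).
  { destruct (Rle_lt_or_eq_dec _ _ Hgt) as [Hneg|]; auto. exfalso.
    assert (Hty' : t < y). { destruct (Rle_lt_or_eq_dec _ _ Hty); auto. subst t. lra. }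
    destruct (cw_eps g u v t Hc ltac:(lra) (- g t) ltac:(lra)) as [d [Hd0 Hd2]].
    set (s := Rmin (t + d/2) y).
    assert (Hs1 := Rmin_l (t + d/2) y). assert (Hs2 := Rmin_r (t + d/2) y). fold s in Hs1, Hs2.
    assert (t < s). { unfold s; apply Rmin_glb_lt; lra. }
    assert (E s). { split. lra. intros r Hr.
      destruct (Rtotal_order r t) as [Hrt|[Hrt|Hrt]].
      - apply HA; lra.
      - subst; lra.
      - specialize (Hd2 r ltac:(lra) ltac:(rewrite Rabs_pos_eq; lra)). apply Rabs_def2 in Hd2. lra. }
    assert (s <= t) by (apply Ht1; auto). lra. }
  destruct (Hd t ltac:(lra) Hgt0) as [l [Hl Hdl]].
  destruct (deriv_sign g t l Hdl Hgt0 Hl) as [eta [He [_ H2]]].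
  set (r := Rmax u (t - eta) + (t - Rmax u (t - eta)) / 2).
  assert (Hm1 := Rmax_l u (t - eta)). assert (Hm2 := Rmax_r u (t - eta)).
  assert (Hm3 : Rmax u (t - eta) < t). { apply Rmax_lub_lt; lra. }
  specialize (H2 r ltac:(unfold r; lra)). specialize (HA r ltac:(unfold r; lra)). lra.
Qed.

Lemma stay (g : R -> R) (u v : R) : u < v -> cw g u v -> g u < 0 ->
  (forall x, u < x < v -> g x < 0 -> exists l, l <= 0 /\ is_derive g x l) ->
  forall x, u <= x <= v -> g x <= g u.
Proof.
  intros Huv Hc Hu Hd.
  assert (Hint : forall x, u < x < v -> g x <= g u).
  { intros x Hx. apply Rnot_lt_le. intros Hlt.
    set (e0 := - g u / (1 + v - u)).
    assert (He0 : 0 < e0). { unfold e0. apply Rdiv_lt_0_compat; lra. }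
    set (eps := Rmin e0 ((g x - g u) / (1 + v - u)) / 2).
    assert (Hep1 := Rmin_l e0 ((g x - g u) / (1 + v - u))).
    assert (Hep2 := Rmin_r e0 ((g x - g u) / (1 + v - u))).
    assert (Hep3 : 0 < Rmin e0 ((g x - g u) / (1 + v - u))).
    { apply Rmin_pos; auto. apply Rdiv_lt_0_compat; lra. }
    set (k := fun t => g t - g u - eps * (1 + t - u)).
    assert (Hk : k x < 0).
    { apply (barrier k u v Huv).
      - apply cw_minus. apply cw_minus; auto. apply cw_const.
        apply cw_mult. apply cw_const. apply cw_minus. apply cw_plus. apply cw_const. apply cw_id. apply cw_const.
      - unfold k. assert (0 < eps) by (unfold eps; lra). nra.
      - intros t Ht Hk0. unfold k in Hk0.
        assert (Htu : u < t). { destruct (Rle_lt_or_eq_dec _ _ (proj1 Ht)); auto. subst t.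
          assert (0 < eps) by (unfold eps; lra). nra. }
        assert (Hgt : g t < 0).
        { assert (eps * (1 + t - u) < - g u).
          { apply Rle_lt_trans with (e0 / 2 * (1 + v - u)).
            apply Rmult_le_compat; unfold eps; lra.
            replace (e0 / 2 * (1 + v - u)) with (- g u / 2) by (unfold e0; field; lra). lra. }
          lra. }
        destruct (Hd t ltac:(lra) Hgt) as [l [Hl Hdl]].
        exists (l - eps * 1). split. assert (0 < eps) by (unfold eps; lra). lra.
        unfold k. apply isd_minus. apply isd_eq with (l - 0). ring. apply isd_minus. auto. apply isd_const.
        apply (is_derive_scal (fun t => 1 + t - u)). apply isd_eq with (0 + 1 - 0). ring.
        apply isd_minus. apply isd_plus. apply isd_const. apply isd_id. apply isd_const.
      - auto. }
    unfold k in Hk.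
    assert (eps * (1 + x - u) < g x - g u).
    { apply Rle_lt_trans with ((g x - g u) / (1 + v - u) / 2 * (1 + v - u)).
      apply Rmult_le_compat; unfold eps; lra.
      replace ((g x - g u) / (1 + v - u) / 2 * (1 + v - u)) with ((g x - g u)/2) by (field; lra). lra. }
    lra. }
  intros x Hx. apply (cw_le_pt g u v (g u) x Huv Hc Hx Hint).
Qed.

Lemma mono (g : R -> R) (u v : R) : u < v -> cw g u v ->
  (forall x, u < x < v -> exists l, l <= 0 /\ is_derive g x l) ->
  forall x, u <= x <= v -> g x <= g u.
Proof.
  intros Huv Hc Hd x Hx.
  assert (H := stay (fun t => g t - g u - 1) u v Huv).
  assert (g x - g u - 1 <= g u - g u - 1).
  { apply H; auto. apply cw_minus. apply cw_minus; auto. apply cw_const. apply cw_const. lra.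
    intros t Ht _. destruct (Hd t Ht) as [l [Hl Hdl]]. exists (l - 0 - 0). split. lra.
    apply isd_minus. apply isd_minus. auto. apply isd_const. apply isd_const. }
  lra.
Qed.

Lemma isd_cont (f : R -> R) x l : is_derive f x l -> continuity_pt f x.
Proof. intros H. apply continuity_pt_filterlim. apply (@ex_derive_continuous R_AbsRing R_NormedModule f). exists l; auto. Qed.

Lemma isd_continuous (f : R -> R) x l : is_derive f x l -> continuous f x.
Proof. intros H. apply (@ex_derive_continuous R_AbsRing R_NormedModule f). exists l; auto. Qed.

Lemma neg_max (z : R -> R) u v : u <= v -> (forall x, u <= x <= v -> continuity_pt z x) ->
  (forall x, u <= x <= v -> z x < 0) -> exists m, m < 0 /\ forall x, u <= x <= v -> z x <= m.
Proof.
  intros Huv Hc Hn. destruct (continuity_ab_maj z u v Huv Hc) as [M [HM1 HM2]].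
  exists (z M). split. apply Hn; auto. auto.
Qed.

Lemma uniq_gen (h q : R -> R) (c : R) (z w : R -> R) (A B Q x0 : R) :
  A < x0 < B -> cw z A B -> cw w A B ->
  (forall x, A < x < B -> z x < 0) -> (forall x, A < x < B -> w x < 0) ->
  (forall x, A < x < B -> is_derive z x (h x - c - q x / z x)) ->
  (forall x, A < x < B -> is_derive w x (h x - c - q x / w x)) ->
  (forall x, A < x < B -> 0 <= q x <= Q) ->
  z x0 = w x0 -> forall x, A <= x <= B -> z x = w x.
Proof.
  intros Hx0 Hcz Hcw Hzn Hwn Hzd Hwd Hq Heq.
  assert (Hint : forall x, A < x < B -> z x = w x).
  { intros x Hx.
    set (u := Rmin x x0). set (v := Rmax x x0).
    assert (Hu1 := Rmin_l x x0). assert (Hu2 := Rmin_r x x0).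
    assert (Hv1 := Rmax_l x x0). assert (Hv2 := Rmax_r x x0). fold u in Hu1, Hu2. fold v in Hv1, Hv2.
    assert (HuA : A < u). { unfold u. apply Rmin_glb_lt; lra. }
    assert (HvB : v < B). { unfold v. apply Rmax_lub_lt; lra. }
    destruct (neg_max z u v ltac:(lra)) as [mz [Hmz Hmz2]].
    { intros t Ht. apply isd_cont with (h t - c - q t / z t). apply Hzd; lra. }
    { intros t Ht. apply Hzn; lra. }
    destruct (neg_max w u v ltac:(lra)) as [mw [Hmw Hmw2]].
    { intros t Ht. apply isd_cont with (h t - c - q t / w t). apply Hwd; lra. }
    { intros t Ht. apply Hwn; lra. }
    set (K := Q / (mz * mw)).
    set (d := fun t => z t - w t).
    assert (Hdd : forall t, A < t < B -> is_derive d t (q t / (z t * w t) * d t)).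
    { intros t Ht. unfold d. apply isd_eq with ((h t - c - q t / z t) - (h t - c - q t / w t)).
      assert (z t < 0) by (apply Hzn; auto). assert (w t < 0) by (apply Hwn; auto).
      field. split; lra. apply isd_minus; auto. }
    assert (Ha : forall t, u <= t <= v -> 0 <= q t / (z t * w t) <= K).
    { intros t Ht. assert (Hzt := Hmz2 t Ht). assert (Hwt := Hmw2 t Ht).
      assert (Hq' := Hq t ltac:(lra)).
      assert (0 < mz * mw) by nra. assert (mz * mw <= z t * w t) by nra.
      split. apply Rdiv_le_0_compat; nra.
      unfold K. unfold Rdiv. apply Rmult_le_compat. lra. left; apply Rinv_0_lt_compat; nra. lra.
      apply Rinv_le_contravar; lra. }
    destruct (Rtotal_order x x0) as [Hlt|[Heq'|Hgt]].
    -
      assert (Hu : u = x) by (unfold u; apply Rmin_left; lra).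
      assert (Hv : v = x0) by (unfold v; apply Rmax_right; lra).
      set (g := fun t => - (d t * d t)).
      assert (Hgd : forall t, A < t < B -> is_derive g t (- (q t / (z t * w t) * d t * d t + d t * (q t / (z t * w t) * d t)))).
      { intros t Ht. unfold g. apply (is_derive_opp (fun t => d t * d t)). apply isd_mult; auto. }
      assert (g x0 <= g x).
      { apply (mono g x x0 Hlt).
        - apply cw_cont. intros t Ht. eapply isd_continuous. apply Hgd. lra.
        - intros t Ht. eexists; split; [|apply Hgd; lra].
          assert (Ht' := Ha t ltac:(lra)). nra.
        - lra. }
      unfold g, d in H. rewrite Heq in H. assert ((z x - w x) * (z x - w x) <= 0) by lra.
      nra.
    - subst; auto.
    - assert (Hu : u = x0) by (unfold u; apply Rmin_right; lra).
      assert (Hv : v = x) by (unfold v; apply Rmax_left; lra).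
      set (g := fun t => d t * d t * exp (- (2 * K) * t)).
      assert (Hex : forall t, is_derive (fun t => exp (- (2 * K) * t)) t (- (2 * K) * exp (- (2 * K) * t))).
      { intros t. auto_derive. auto. ring. }
      assert (Hgd : forall t, A < t < B -> is_derive g t
         ((q t / (z t * w t) * d t * d t + d t * (q t / (z t * w t) * d t)) * exp (- (2 * K) * t)
          + d t * d t * (- (2 * K) * exp (- (2 * K) * t)))).
      { intros t Ht. unfold g. apply (isd_mult (fun t => d t * d t) (fun t => exp (- (2 * K) * t))); auto. apply isd_mult; auto. }
      assert (g x <= g x0).
      { apply (mono g x0 x Hgt).
        - apply cw_cont. intros t Ht. eapply isd_continuous. apply Hgd. lra.
        - intros t Ht. eexists; split; [|apply Hgd; lra].
          assert (Ht' := Ha t ltac:(lra)). assert (He := exp_pos (- (2 * K) * t)).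
          assert (0 <= d t * d t) by nra.
          replace ((q t / (z t * w t) * d t * d t + d t * (q t / (z t * w t) * d t)) * exp (- (2 * K) * t)
            + d t * d t * (- (2 * K) * exp (- (2 * K) * t))) with
            (2 * (d t * d t) * exp (- (2 * K) * t) * (q t / (z t * w t) - K)) by ring.
          assert (0 <= 2 * (d t * d t) * exp (- (2 * K) * t)) by nra. nra.
        - lra. }
      unfold g, d in H. rewrite Heq in H. replace ((w x0 - w x0) * (w x0 - w x0) * exp (- (2 * K) * x0)) with 0 in H by ring.
      assert (He := exp_pos (- (2 * K) * x)).
      assert ((z x - w x) * (z x - w x) <= 0).
      { apply Rmult_le_reg_r with (exp (- (2 * K) * x)); auto. lra. }
      nra. }
  intros x Hx.
  assert (Hab : A < B) by lra.
  assert (H1 : z x - w x <= 0).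
  { apply (cw_le_pt (fun t => z t - w t) A B 0 x Hab); auto. apply cw_minus; auto.
    intros y Hy; rewrite Hint; auto; lra. }
  assert (H2 : w x - z x <= 0).
  { apply (cw_le_pt (fun t => w t - z t) A B 0 x Hab); auto. apply cw_minus; auto.
    intros y Hy; rewrite Hint; auto; lra. }
  lra.
Qed.

Definition clamp (t : R) : R := Rmax 0 (Rmin 1 t).

Lemma clamp_range t : 0 <= clamp t <= 1.
Proof. unfold clamp, Rmax, Rmin. repeat destruct Rle_dec; lra. Qed.

Lemma clamp_id t : 0 <= t <= 1 -> clamp t = t.
Proof. intros. unfold clamp, Rmax, Rmin. repeat destruct Rle_dec; lra. Qed.

Lemma clamp_lip x y : Rabs (clamp y - clamp x) <= Rabs (y - x).
Proof. unfold clamp, Rmax, Rmin, Rabs. repeat destruct Rle_dec; repeat destruct Rcase_abs; lra. Qed.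

Lemma cont_eps (f : R -> R) x : (forall eps, 0 < eps -> exists d, 0 < d /\
  forall y, Rabs (y - x) < d -> Rabs (f y - f x) < eps) -> continuity_pt f x.
Proof.
  intros H eps He. destruct (H eps He) as [d [Hd H2]]. exists d. split. lra.
  intros y [_ Hy]. apply H2. exact Hy.
Qed.

Lemma cont_clamp (g : R -> R) : cont01 g -> forall x, continuity_pt (fun t => g (clamp t)) x.
Proof.
  intros Hg x. apply cont_eps. intros eps He.
  destruct (cw_eps g 0 1 (clamp x) Hg (clamp_range x) eps He) as [d [Hd H2]].
  exists d. split; auto. intros y Hy. apply H2. apply clamp_range.
  eapply Rle_lt_trans. apply clamp_lip. auto.
Qed.

Lemma cont_continuous (f : R -> R) x : continuity_pt f x -> continuous f x.
Proof. intros H. apply continuity_pt_filterlim. auto. Qed.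

Lemma cw_of_ctpt (f : R -> R) u v : (forall x, u <= x <= v -> continuity_pt f x) -> cw f u v.
Proof. intros H. apply cw_cont. intros. apply cont_continuous; auto. Qed.

Lemma cmp_cs (h q : R -> R) (c cs : R) (z zs : R -> R) (x1 x2 : R) :
  cs < c -> x1 < x2 -> cw z x1 x2 -> cw zs x1 x2 ->
  (forall x, x1 <= x < x2 -> z x < 0 /\ zs x < 0 /\ 0 <= q x /\
     is_derive z x (h x - c - q x / z x) /\ is_derive zs x (h x - cs - q x / zs x)) ->
  z x1 <= zs x1 -> z x2 < zs x2.
Proof.
  intros Hc Hx Hcz Hczs H H1.
  set (d := fun t => z t - zs t).
  assert (Hdd : forall t, x1 <= t < x2 -> is_derive d t (cs - c + q t / (z t * zs t) * d t)).
  { intros t Ht. destruct (H t Ht) as [Hz [Hzs [Hq [Hdz Hdzs]]]].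
    unfold d. apply isd_eq with ((h t - c - q t / z t) - (h t - cs - q t / zs t)).
    field. split; lra. apply isd_minus; auto. }
  assert (Hcd : cw d x1 x2) by (apply cw_minus; auto).
  assert (Hneg : forall t, x1 < t < x2 -> d t < 0).
  { apply barrier; auto. unfold d; lra.
    intros t Ht Ht0. exists (cs - c + q t / (z t * zs t) * d t). split.
    rewrite Ht0. lra. apply Hdd; auto. }
  set (m := (x1 + x2) / 2).
  assert (Hm : d m < 0) by (apply Hneg; unfold m; lra).
  assert (d x2 <= d m).
  { apply (stay d m x2). unfold m; lra. apply (cw_sub d x1 x2); auto; unfold m; lra. auto.
    intros t Ht Hdt. exists (cs - c + q t / (z t * zs t) * d t). split.
    destruct (H t ltac:(unfold m in *; lra)) as [Hz [Hzs [Hq _]]].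
    assert (0 <= q t / (z t * zs t)). { apply Rdiv_le_0_compat; nra. }
    nra. apply Hdd. unfold m in *; lra. unfold m; lra. }
  unfold d in *. lra.
Qed.

Lemma cmp_same (h q : R -> R) (c : R) (z w : R -> R) (x1 x2 : R) :
  x1 < x2 -> cw z x1 x2 -> cw w x1 x2 ->
  (forall x, x1 < x < x2 -> z x < 0 /\ w x < 0 /\ 0 <= q x /\
     is_derive z x (h x - c - q x / z x) /\ is_derive w x (h x - c - q x / w x)) ->
  z x1 < w x1 -> z x2 - w x2 <= z x1 - w x1.
Proof.
  intros Hx Hcz Hcw H H1.
  apply (stay (fun t => z t - w t) x1 x2); auto. apply cw_minus; auto. lra.
  intros t Ht Hdt. destruct (H t Ht) as [Hz [Hw [Hq [Hdz Hdw]]]].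
  exists (q t / (z t * w t) * (z t - w t)). split.
  assert (0 <= q t / (z t * w t)). { apply Rdiv_le_0_compat; nra. } nra.
  apply isd_eq with ((h t - c - q t / z t) - (h t - c - q t / w t)).
  field. split; lra. apply isd_minus; auto. lra.
Qed.

Lemma exp_mono a b : a <= b -> exp a <= exp b.
Proof. intros H. destruct (Rle_lt_or_eq_dec _ _ H). left; apply exp_increasing; auto. subst; lra. Qed.

Lemma cw_deriv (g : R -> R) u v : (forall t, u <= t <= v -> exists l, is_derive g t l) -> cw g u v.
Proof. intros H. apply cw_cont. intros t Ht. destruct (H t Ht) as [l Hl]. eapply isd_continuous; eauto. Qed.

Lemma exp_bound (f : R -> R) (x0 L N : R) : 0 < L -> 0 <= N -> f x0 = 0 ->
  (forall t, exists l, is_derive f t l /\ Rabs l <= N * (2 * L) * exp (2 * L * Rabs (t - x0))) ->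
  forall x, Rabs (f x) <= N * (exp (2 * L * Rabs (x - x0)) - 1).
Proof.
  intros HL HN Hf0 Hd x.
  assert (Hcw : forall g u v, (forall t, exists l, is_derive g t l) -> cw g u v).
  { intros g u v Hg. apply cw_deriv. intros; auto. }
  destruct (Rtotal_order x x0) as [Hlt|[Heq|Hgt]].
  - rewrite (Rabs_left (x - x0)) by lra.
    set (b := fun t => N * (exp (2 * L * (x0 - t)) - 1)).
    assert (Hb : forall t, is_derive b t (- (N * (2 * L) * exp (2 * L * (x0 - t))))).
    { intros t. unfold b. auto_derive. auto. replace (x0 + - t) with (x0 - t) by ring. ring. }
    assert (Hb0 : b x0 = 0). { unfold b. replace (2 * L * (x0 - x0)) with 0 by ring. rewrite exp_0. ring. }
    assert (K1 : - (f x0 - b x0) <= - (f x - b x)).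
    { apply (mono (fun t => - (f t - b t)) x x0 Hlt).
      - apply Hcw. intros t. destruct (Hd t) as [l [Hl _]]. eexists.
        apply (is_derive_opp (fun t => f t - b t)). apply isd_minus; eauto.
      - intros t Ht. destruct (Hd t) as [l [Hl Hl2]]. eexists; split.
        2: { apply (is_derive_opp (fun t => f t - b t)). apply isd_minus; eauto. }
        rewrite (Rabs_left (t - x0)) in Hl2 by lra. replace (- (t - x0)) with (x0 - t) in Hl2 by ring.
        apply Rabs_le_between in Hl2. unfold opp; simpl. lra.
      - lra. }
    assert (K2 : - (- f x0 - b x0) <= - (- f x - b x)).
    { apply (mono (fun t => - (- f t - b t)) x x0 Hlt).
      - apply Hcw. intros t. destruct (Hd t) as [l [Hl _]]. eexists.
        apply (is_derive_opp (fun t => - f t - b t)). apply isd_minus; eauto.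
        apply (is_derive_opp f); eauto.
      - intros t Ht. destruct (Hd t) as [l [Hl Hl2]]. eexists; split.
        2: { apply (is_derive_opp (fun t => - f t - b t)). apply isd_minus; eauto.
             apply (is_derive_opp f); eauto. }
        rewrite (Rabs_left (t - x0)) in Hl2 by lra. replace (- (t - x0)) with (x0 - t) in Hl2 by ring.
        apply Rabs_le_between in Hl2. unfold opp; simpl. lra.
      - lra. }
    unfold b in *. rewrite Hf0, Hb0 in *. replace (- (x - x0)) with (x0 - x) by ring. apply Rabs_le. lra.
  - subst. rewrite Hf0. replace (x0 - x0) with 0 by ring. rewrite Rabs_R0, Rmult_0_r, exp_0. lra.
  - rewrite (Rabs_pos_eq (x - x0)) by lra.
    set (b := fun t => N * (exp (2 * L * (t - x0)) - 1)).
    assert (Hb : forall t, is_derive b t (N * (2 * L) * exp (2 * L * (t - x0)))).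
    { intros t. unfold b. auto_derive. auto. replace (t + - x0) with (t - x0) by ring. ring. }
    assert (Hb0 : b x0 = 0). { unfold b. replace (2 * L * (x0 - x0)) with 0 by ring. rewrite exp_0. ring. }
    assert (K1 : f x - b x <= f x0 - b x0).
    { apply (mono (fun t => f t - b t) x0 x Hgt).
      - apply Hcw. intros t. destruct (Hd t) as [l [Hl _]]. eexists. apply isd_minus; eauto.
      - intros t Ht. destruct (Hd t) as [l [Hl Hl2]]. eexists; split.
        2: { apply isd_minus; eauto. }
        rewrite (Rabs_pos_eq (t - x0)) in Hl2 by lra.
        apply Rabs_le_between in Hl2. lra.
      - lra. }
    assert (K2 : - f x - b x <= - f x0 - b x0).
    { apply (mono (fun t => - f t - b t) x0 x Hgt).
      - apply Hcw. intros t. destruct (Hd t) as [l [Hl _]]. eexists. apply isd_minus; eauto.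
        apply (is_derive_opp f); eauto.
      - intros t Ht. destruct (Hd t) as [l [Hl Hl2]]. eexists; split.
        2: { apply isd_minus; eauto. apply (is_derive_opp f); eauto. }
        rewrite (Rabs_pos_eq (t - x0)) in Hl2 by lra.
        apply Rabs_le_between in Hl2. unfold opp; simpl. lra.
      - lra. }
    unfold b in *. rewrite Hf0, Hb0 in *. apply Rabs_le. lra.
Qed.

Fixpoint Pic (G : R -> R -> R) (x0 v : R) (n : nat) : R -> R :=
  match n with
  | O => fun _ => v
  | S n => fun x => v + RInt (fun s => G s (Pic G x0 v n s)) x0 x
  end.

Lemma exR (f : R -> R) a b : (forall t, continuity_pt f t) -> ex_RInt f a b.
Proof. intros H. apply (@ex_RInt_continuous R_CompleteNormedModule f a b). intros. apply cont_continuous; auto. Qed.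

Lemma derive_int (f : R -> R) x0 v t : (forall t, continuity_pt f t) ->
  is_derive (fun x => v + RInt f x0 x) t (f t).
Proof.
  intros H. apply isd_eq with (0 + f t). ring. apply isd_plus. apply isd_const.
  apply (is_derive_RInt f (RInt f x0) x0 t).
  - apply filter_forall. intros b. apply (@RInt_correct R_CompleteNormedModule f x0 b). apply exR; auto.
  - apply cont_continuous; auto.
Qed.

Lemma RInt_bound (f : R -> R) a b M : (forall t, continuity_pt f t) ->
  (forall t, Rmin a b <= t <= Rmax a b -> Rabs (f t) <= M) ->
  Rabs (RInt f a b) <= Rabs (b - a) * M.
Proof.
  intros Hc Hb. destruct (Rle_or_lt a b) as [Hab|Hab].
  - rewrite (Rabs_pos_eq (b - a)) by lra. apply abs_RInt_le_const; auto. apply exR; auto.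
    intros t Ht. apply Hb. rewrite Rmin_left, Rmax_right; lra.
  - rewrite <- (@opp_RInt_swap R_CompleteNormedModule f b a) by (apply exR; auto).
    rewrite (Rabs_left (b - a)) by lra.
    change (Rabs (- RInt f b a) <= - (b - a) * M). rewrite Rabs_Ropp.
    replace (- (b - a)) with (a - b) by ring.
    apply abs_RInt_le_const; auto. lra. apply exR; auto.
    intros t Ht. apply Hb. rewrite Rmin_right, Rmax_left; lra.
Qed.

Lemma pow_half_small (C : R) : 0 < C -> exists N, forall n, (n >= N)%nat -> (/2) ^ n < C.
Proof.
  intros HC. destruct (pow_lt_1_zero (/2) ltac:(rewrite Rabs_pos_eq; lra) C HC) as [N HN].
  exists N. intros n Hn. specialize (HN n Hn). rewrite Rabs_pos_eq in HN; auto.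
  apply pow_le. lra.
Qed.

Lemma ctpt_eps (f : R -> R) x : continuity_pt f x -> forall eps, 0 < eps ->
  exists d, 0 < d /\ forall y, Rabs (y - x) < d -> Rabs (f y - f x) < eps.
Proof.
  intros H eps He. destruct (H eps He) as [d [Hd H2]]. exists d. split. lra.
  intros y Hy. destruct (Req_dec y x) as [->|Hne].
  - replace (f x - f x) with 0 by ring. rewrite Rabs_R0. lra.
  - apply (H2 y). split. split. exact I. auto. exact Hy.
Qed.

Lemma small_mult (K eps : R) : 0 <= K -> 0 < eps -> exists N, forall n, (n >= N)%nat -> K * (/2) ^ n < eps.
Proof.
  intros HK He. assert (HC : 0 < eps / (K + 1)) by (apply Rdiv_lt_0_compat; lra).
  destruct (pow_half_small _ HC) as [N HN]. exists N. intros n Hn. specialize (HN n Hn).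
  assert (0 <= (/2) ^ n) by (apply pow_le; lra).
  apply Rle_lt_trans with ((K + 1) * (/2) ^ n). nra.
  apply Rlt_le_trans with ((K + 1) * (eps / (K + 1))).
  apply Rmult_lt_compat_l; lra. right; field; lra.
Qed.

Lemma picard (G : R -> R -> R) (x0 v B L : R) :
  0 < L -> 0 <= B ->
  (forall u, (forall t, continuity_pt u t) -> forall t, continuity_pt (fun s => G s (u s)) t) ->
  (forall t y, Rabs (G t y) <= B) ->
  (forall t y1 y2, Rabs (G t y1 - G t y2) <= L * Rabs (y1 - y2)) ->
  exists w, (forall t, continuity_pt w t) /\ w x0 = v /\ forall t, is_derive w t (G t (w t)).
Proof.
  intros HL HB HGc HGb HGl.
  set (P := Pic G x0 v).
  assert (Pc : forall n t, continuity_pt (P n) t).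
  { induction n; intros t.
    - simpl. apply continuity_pt_const. intros a b; auto.
    - apply isd_cont with (G t (P n t)). apply (derive_int (fun s => G s (P n s))). apply HGc; auto. }
  assert (Pd : forall n t, is_derive (P (S n)) t (G t (P n t))).
  { intros n t. apply (derive_int (fun s => G s (P n s))). apply HGc; auto. }
  assert (P0 : forall n, P n x0 = v).
  { intros [|n]. reflexivity. unfold P; simpl. rewrite RInt_point. unfold zero; simpl. ring. }
  set (M := B / (2 * L)).
  assert (HM : 0 <= M) by (unfold M; apply Rdiv_le_0_compat; lra).
  set (E := fun x => exp (2 * L * Rabs (x - x0))).
  assert (HE1 : forall x, 1 <= E x).
  { intros x. unfold E. rewrite <- exp_0. apply exp_mono.
    assert (0 <= Rabs (x - x0)) by apply Rabs_pos. nra. }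
  assert (Hdiff : forall n x, Rabs (P (S n) x - P n x) <= M * (/2) ^ n * (E x - 1)).
  { induction n; intros x.
    - apply (exp_bound (fun x => P 1%nat x - P 0%nat x) x0 L (M * (/2) ^ 0)); auto.
      simpl; nra. rewrite !P0. ring.
      intros t. exists (G t (P 0%nat t) - 0). split. apply isd_minus. apply Pd.
      simpl. apply isd_const.
      rewrite Rminus_0_r. apply Rle_trans with B. apply HGb.
      simpl. unfold M. specialize (HE1 t). unfold E in HE1.
      replace (B / (2 * L) * 1 * (2 * L)) with B by (field; lra). nra.
    - apply (exp_bound (fun x => P (S (S n)) x - P (S n) x) x0 L (M * (/2) ^ S n)); auto.
      apply Rmult_le_pos; auto. apply pow_le; lra.
      rewrite !P0. ring.
      intros t. exists (G t (P (S n) t) - G t (P n t)). split. apply isd_minus; apply Pd.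
      apply Rle_trans with (L * Rabs (P (S n) t - P n t)). apply HGl.
      apply Rle_trans with (L * (M * (/2) ^ n * (E t - 1))). apply Rmult_le_compat_l. lra. apply IHn.
      simpl. unfold E. assert (0 <= M * (/2) ^ n) by (apply Rmult_le_pos; auto; apply pow_le; lra).
      assert (Hx := exp_pos (2 * L * Rabs (t - x0))). nra. }
  assert (Hcau : forall n j x, Rabs (P (n + j)%nat x - P n x) <= 2 * M * E x * ((/2) ^ n - (/2) ^ (n + j))).
  { intros n j x. induction j.
    - rewrite Nat.add_0_r. replace (P n x - P n x) with 0 by ring. rewrite Rabs_R0. right; ring.
    - replace (P (n + S j)%nat x - P n x) with ((P (S (n + j)) x - P (n + j)%nat x) + (P (n + j)%nat x - P n x))
        by (rewrite Nat.add_succ_r; ring).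
      eapply Rle_trans. apply Rabs_triang.
      rewrite Nat.add_succ_r. simpl pow.
      specialize (Hdiff (n + j)%nat x). specialize (HE1 x).
      assert (0 <= M * (/2) ^ (n + j)) by (apply Rmult_le_pos; auto; apply pow_le; lra).
      nra. }
  assert (Hcau2 : forall n m x, (n <= m)%nat -> Rabs (P m x - P n x) <= 2 * M * E x * (/2) ^ n).
  { intros n m x Hnm. replace m with (n + (m - n))%nat by lia.
    eapply Rle_trans. apply Hcau. assert (0 <= (/2) ^ (n + (m - n))) by (apply pow_le; lra).
    assert (0 <= 2 * M * E x) by (specialize (HE1 x); nra). nra. }
  assert (Hex : forall x, ex_finite_lim_seq (fun n => P n x)).
  { intros x. apply ex_lim_seq_cauchy_corr. intros eps.
    set (K := 2 * M * E x).
    assert (HK : 0 <= K) by (unfold K; specialize (HE1 x); nra).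
    assert (HC : 0 < (eps / 2) / (K + 1)).
    { apply Rdiv_lt_0_compat. assert (H := cond_pos eps). lra. lra. }
    destruct (pow_half_small _ HC) as [N HN]. exists N. intros n m Hn Hm.
    assert (H1 := HN N (le_n N)).
    assert (H2 : K * (/2) ^ N < eps / 2).
    { assert (0 <= (/2) ^ N) by (apply pow_le; lra).
      apply Rle_lt_trans with ((K + 1) * (/2) ^ N). nra.
      apply Rlt_le_trans with ((K + 1) * ((eps / 2) / (K + 1))).
      apply Rmult_lt_compat_l; lra. right; field; lra. }
    replace (P n x - P m x) with ((P n x - P N x) - (P m x - P N x)) by ring.
    eapply Rle_lt_trans. apply Rabs_triang. rewrite Rabs_Ropp.
    assert (Hn' := Hcau2 N n x Hn). assert (Hm' := Hcau2 N m x Hm). fold K in Hn', Hm'.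
    lra. }
  set (w := fun x => real (Lim_seq (fun n => P n x))).
  assert (Hlim : forall x, is_lim_seq (fun n => P n x) (w x)).
  { intros x. destruct (Hex x) as [l Hl]. unfold w. rewrite (is_lim_seq_unique _ _ Hl). simpl. auto. }
  assert (Hwb : forall n x, Rabs (w x - P n x) <= 2 * M * E x * (/2) ^ n).
  { intros n x. apply Rnot_lt_le. intros Hlt.
    set (eps := (Rabs (w x - P n x) - 2 * M * E x * (/2) ^ n) / 2).
    assert (He : 0 < eps) by (unfold eps; lra).
    destruct (proj2 (is_lim_seq_spec _ _) (Hlim x) (mkposreal eps He)) as [N HN].
    specialize (HN (max N n) (Nat.le_max_l _ _)). simpl in HN.
    assert (H2 := Hcau2 n (max N n) x (Nat.le_max_r _ _)).
    assert (Rabs (w x - P n x) <= Rabs (P (max N n) x - w x) + Rabs (P (max N n) x - P n x)).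
    { replace (w x - P n x) with (- (P (max N n) x - w x) + (P (max N n) x - P n x)) by ring.
      eapply Rle_trans. apply Rabs_triang. rewrite Rabs_Ropp. lra. }
    unfold eps in *. lra. }
  assert (HEb : forall x t, Rabs (t - x0) <= Rabs (x - x0) + 1 -> E t <= exp (2 * L * (Rabs (x - x0) + 1))).
  { intros x t Ht. unfold E. apply exp_mono. nra. }
  assert (Wc : forall x, continuity_pt w x).
  { intros x. apply cont_eps. intros eps He.
    set (K1 := 2 * M * exp (2 * L * (Rabs (x - x0) + 1))).
    assert (HK1 : 0 <= K1). { unfold K1. assert (Hx := exp_pos (2 * L * (Rabs (x - x0) + 1))). nra. }
    destruct (small_mult K1 (eps / 3) HK1 ltac:(lra)) as [N HN].
    specialize (HN N (le_n N)).
    destruct (ctpt_eps (P N) x (Pc N x) (eps / 3) ltac:(lra)) as [d [Hd Hd2]].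
    exists (Rmin d 1). split. apply Rmin_pos; lra. intros t Ht.
    assert (Ht1 := Rmin_l d 1). assert (Ht2 := Rmin_r d 1).
    assert (Hbt : Rabs (w t - P N t) <= K1 * (/2) ^ N).
    { eapply Rle_trans. apply Hwb. assert (0 <= (/2) ^ N) by (apply pow_le; lra).
      assert (E t <= exp (2 * L * (Rabs (x - x0) + 1))).
      { apply HEb. replace (t - x0) with ((t - x) + (x - x0)) by ring.
        eapply Rle_trans. apply Rabs_triang. lra. }
      unfold K1. apply Rmult_le_compat_r; auto. nra. }
    assert (Hbx : Rabs (w x - P N x) <= K1 * (/2) ^ N).
    { eapply Rle_trans. apply Hwb. assert (0 <= (/2) ^ N) by (apply pow_le; lra).
      assert (E x <= exp (2 * L * (Rabs (x - x0) + 1))).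
      { apply HEb. lra. }
      unfold K1. apply Rmult_le_compat_r; auto. nra. }
    specialize (Hd2 t ltac:(lra)).
    replace (w t - w x) with ((w t - P N t) + (P N t - P N x) - (w x - P N x)) by ring.
    eapply Rle_lt_trans. apply Rabs_triang. eapply Rle_lt_trans. apply Rplus_le_compat_r. apply Rabs_triang.
    rewrite Rabs_Ropp. lra. }
  assert (GWc : forall t, continuity_pt (fun s => G s (w s)) t) by (apply HGc; auto).
  assert (Hint : forall x, w x = v + RInt (fun s => G s (w s)) x0 x).
  { intros x. apply Rminus_diag_uniq. apply Rabs_eq_0. apply Rle_antisym; [|apply Rabs_pos].
    apply le_epsilon. intros eps He. rewrite Rplus_0_l.
    set (Kx := 2 * M * E x).
    assert (HKx : 0 <= Kx). { unfold Kx. specialize (HE1 x). nra. }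
    assert (HL' : 0 <= (1 + Rabs (x - x0) * L) * Kx).
    { assert (0 <= Rabs (x - x0)) by apply Rabs_pos. apply Rmult_le_pos; auto. assert (0 <= Rabs (x - x0) * L) by (apply Rmult_le_pos; lra). lra. }
    destruct (small_mult _ eps HL' He) as [N HN]. specialize (HN N (le_n N)).
    assert (H1 : Rabs (w x - P (S N) x) <= Kx * (/2) ^ N).
    { eapply Rle_trans. apply Hwb. fold Kx. simpl pow.
      assert (0 <= (/2) ^ N) by (apply pow_le; lra). nra. }
    assert (H2 : P (S N) x - (v + RInt (fun s => G s (w s)) x0 x) =
      RInt (fun s => G s (P N s) - G s (w s)) x0 x).
    { assert (Hm := @RInt_minus R_CompleteNormedModule (fun s => G s (P N s)) (fun s => G s (w s)) x0 x
         (exR _ _ _ (HGc _ (Pc N))) (exR _ _ _ GWc)).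
      transitivity (RInt (fun s => G s (P N s)) x0 x - RInt (fun s => G s (w s)) x0 x).
      unfold P at 1; simpl. fold P. ring. exact (eq_sym Hm). }
    assert (H3 : Rabs (RInt (fun s => G s (P N s) - G s (w s)) x0 x) <= Rabs (x - x0) * (L * (Kx * (/2) ^ N))).
    { apply RInt_bound.
      - intros t. apply continuity_pt_minus. apply HGc; auto. auto.
      - intros t Ht. eapply Rle_trans. apply HGl. apply Rmult_le_compat_l. lra.
        rewrite <- Rabs_Ropp. replace (- (P N t - w t)) with (w t - P N t) by ring.
        eapply Rle_trans. apply Hwb. unfold Kx. assert (0 <= (/2) ^ N) by (apply pow_le; lra).
        apply Rmult_le_compat_r; auto. apply Rmult_le_compat_l. lra. unfold E. apply exp_mono.
        apply Rmult_le_compat_l. lra.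
        assert (Rabs (t - x0) <= Rabs (x - x0)).
        { destruct (Rle_or_lt x0 x).
          rewrite Rmin_left, Rmax_right in Ht by lra. rewrite !Rabs_pos_eq; lra.
          rewrite Rmin_right, Rmax_left in Ht by lra. rewrite !Rabs_left1; lra. }
        lra. }
    replace (w x - (v + RInt (fun s => G s (w s)) x0 x)) with
      ((w x - P (S N) x) + (P (S N) x - (v + RInt (fun s => G s (w s)) x0 x))) by ring.
    rewrite H2. eapply Rle_trans. apply Rabs_triang.
    assert (0 <= (/2) ^ N) by (apply pow_le; lra).
    assert (0 <= Rabs (x - x0)) by apply Rabs_pos. nra. }
  exists w. split; auto. split.
  - rewrite Hint. rewrite RInt_point. unfold zero; simpl. ring.
  - intros t. apply (is_derive_ext (fun x => v + RInt (fun s => G s (w s)) x0 x) w).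
    intros; symmetry; apply Hint. apply (derive_int (fun s => G s (w s))). auto.
Qed.

Lemma ctpt_minus (f g : R -> R) x : continuity_pt f x -> continuity_pt g x -> continuity_pt (fun s => f s - g s) x.
Proof. intros H1 H2. exact (continuity_pt_minus f g x H1 H2). Qed.
Lemma ctpt_div (f g : R -> R) x : continuity_pt f x -> continuity_pt g x -> g x <> 0 -> continuity_pt (fun s => f s / g s) x.
Proof. intros H1 H2 H3. exact (continuity_pt_div f g x H1 H2 H3). Qed.
Lemma ctpt_const (k x : R) : continuity_pt (fun _ => k) x.
Proof. apply continuity_pt_const. intros a b; auto. Qed.
Lemma ctpt_abs (f : R -> R) x : continuity_pt f x -> continuity_pt (fun s => Rabs (f s)) x.
Proof. intros H. exact (continuity_pt_comp f Rabs x H (Rcontinuity_abs (f x))). Qed.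

Lemma inv_le_neg a b : a <= b -> b < 0 -> / b <= / a.
Proof.
  intros H1 H2. replace (/ b) with (- / (- b)) by (field; lra). replace (/ a) with (- / (- a)) by (field; lra).
  apply Ropp_le_contravar. apply Rinv_le_contravar; lra.
Qed.

Lemma Rmin_lip a b k : Rabs (Rmin a k - Rmin b k) <= Rabs (a - b).
Proof. unfold Rmin, Rabs. repeat destruct Rle_dec; repeat destruct Rcase_abs; lra. Qed.

Lemma ctpt_min (f : R -> R) k x : continuity_pt f x -> continuity_pt (fun s => Rmin (f s) k) x.
Proof.
  intros H. apply cont_eps. intros eps He. destruct (ctpt_eps f x H eps He) as [d [Hd H2]].
  exists d. split; auto. intros y Hy. eapply Rle_lt_trans. apply Rmin_lip. auto.
Qed.

Lemma isd_refl (f : R -> R) s l : is_derive f (- s) l -> is_derive (fun s => f (- s)) s (- l).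
Proof.
  intros H. apply isd_eq with (scal (-1) l). unfold scal; simpl. unfold mult; simpl. ring.
  apply (is_derive_comp f (fun s => - s)). auto.
  exact (@is_derive_opp R_AbsRing R_NormedModule (fun s => s) s 1 (isd_id s)).
Qed.

Lemma bound_ext (g : R -> R) (k : R -> R) : cont01 g ->
  (forall y, continuity_pt k y) ->
  exists M, forall t, k (g (clamp t)) <= M.
Proof.
  intros Hg Hk.
  destruct (continuity_ab_maj (fun t => k (g (clamp t))) 0 1 ltac:(lra)) as [Mx [HM _]].
  { intros t Ht. exact (continuity_pt_comp (fun t => g (clamp t)) k t (cont_clamp g Hg t) (Hk _)). }
  exists (k (g (clamp Mx))). intros t. assert (Hc := clamp_range t).
  specialize (HM (clamp t) Hc). rewrite (clamp_id (clamp t)) in HM by auto. auto.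
Qed.

Lemma exist_a (h q : R -> R) (c cs : R) (zs : R -> R) (phi0 a : R) :
  cont01 h -> cont01 q -> (forall x, 0 < x < 1 -> 0 < q x) -> (forall x, 0 <= x <= 1 -> 0 <= q x) ->
  ode_sol h q cs zs -> zs 1 = 0 -> cs < c -> 0 < a < phi0 -> phi0 < 1 ->
  exists w, (forall t, continuity_pt w t) /\ w phi0 = zs phi0 /\
    (forall t, a < t < 1 -> is_derive w t (h t - c - q t / w t)) /\
    (forall t, a < t <= 1 -> w t < 0).
Proof.
  intros Hh Hq Hqp Hq0 [Hzc [Hzn Hzd]] Hzs1 Hc Ha Hp1.
  set (ht := fun t => h (clamp t)). set (qt := fun t => q (clamp t)).
  assert (Hhtc : forall t, continuity_pt ht t) by (apply cont_clamp; auto).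
  assert (Hqtc : forall t, continuity_pt qt t) by (apply cont_clamp; auto).
  destruct (bound_ext h (fun y => Rabs (y - c)) Hh) as [Hb HHb].
  { intros y. apply ctpt_abs. apply ctpt_minus. apply continuity_pt_id. apply ctpt_const. }
  destruct (bound_ext q (fun y => y) Hq) as [Q HQ].
  { intros y. apply continuity_pt_id. }
  assert (Hqt0 : forall t, 0 <= qt t) by (intros t; apply Hq0, clamp_range).
  assert (HHb0 : 0 <= Hb) by (eapply Rle_trans; [apply Rabs_pos|apply (HHb 0)]).
  assert (HQ0 : 0 <= Q) by (eapply Rle_trans; [apply (Hqt0 0)|apply (HQ 0)]).
  set (a' := a / 2).
  destruct (continuity_ab_min qt a' phi0 ltac:(unfold a'; lra)) as [mq [Hmq1 Hmq2]].
  { intros; auto. }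
  set (qm := qt mq).
  assert (Hqm : 0 < qm). { unfold qm, qt. rewrite clamp_id by (unfold a' in *; lra). apply Hqp. unfold a' in *; lra. }
  set (m := (phi0 + 1) / 2).
  destruct (neg_max zs phi0 m ltac:(unfold m; lra)) as [zsM [HzsM HzsM2]].
  { intros t Ht. apply isd_cont with (h t - cs - q t / zs t). apply Hzd. unfold m in *; lra. }
  { intros t Ht. apply Hzn. unfold m in *; lra. }
  set (kap := (c - cs) / 2).
  set (del := Rmin (Rmin (- zsM) (kap * (m - phi0))) (qm / (Hb + 1)) / 2).
  assert (Hd1 := Rmin_l (Rmin (- zsM) (kap * (m - phi0))) (qm / (Hb + 1))).
  assert (Hd2 := Rmin_r (Rmin (- zsM) (kap * (m - phi0))) (qm / (Hb + 1))).
  assert (Hd3 := Rmin_l (- zsM) (kap * (m - phi0))).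
  assert (Hd4 := Rmin_r (- zsM) (kap * (m - phi0))).
  assert (Hkm : 0 < kap * (m - phi0)). { unfold kap, m. apply Rmult_lt_0_compat; lra. }
  assert (Hqb : 0 < qm / (Hb + 1)) by (apply Rdiv_lt_0_compat; lra).
  assert (Hdel : 0 < del).
  { unfold del. assert (0 < Rmin (Rmin (- zsM) (kap * (m - phi0))) (qm / (Hb + 1))).
    apply Rmin_pos; auto. apply Rmin_pos; lra. lra. }
  assert (Hdel1 : 2 * del <= - zsM) by (unfold del; lra).
  assert (Hdel2 : 2 * del <= kap * (m - phi0)) by (unfold del; lra).
  assert (Hdel3 : 2 * del <= qm / (Hb + 1)) by (unfold del; lra).
  set (G := fun t y => ht t - c - qt t / Rmin y (- del)).
  assert (Hmin : forall y, Rmin y (- del) <= - del) by (intros; apply Rmin_r).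
  destruct (picard G phi0 (zs phi0) (Hb + Q / del) (Q / (del * del) + 1)) as [w [Hwc [Hw0 Hwd]]].
  - assert (0 <= Q / (del * del)) by (apply Rdiv_le_0_compat; nra). lra.
  - assert (0 <= Q / del) by (apply Rdiv_le_0_compat; lra). lra.
  - intros u Hu t. unfold G. apply ctpt_minus. apply ctpt_minus; auto. apply ctpt_const.
    apply ctpt_div; auto. apply ctpt_min; auto. specialize (Hmin (u t)). lra.
  - intros t y. unfold G. specialize (Hmin y). specialize (HHb t). specialize (HQ t). specialize (Hqt0 t). change (qt t <= Q) in HQ.
    replace (ht t - c - qt t / Rmin y (- del)) with ((ht t - c) + - (qt t / Rmin y (- del))) by ring.
    eapply Rle_trans. apply Rabs_triang. rewrite Rabs_Ropp. apply Rplus_le_compat. apply HHb.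
    rewrite Rabs_div by lra. rewrite (Rabs_pos_eq (qt t)) by lra. rewrite (Rabs_left (Rmin y (- del))) by lra.
    unfold Rdiv. apply Rmult_le_compat; auto. left; apply Rinv_0_lt_compat; lra.
    apply Rinv_le_contravar; lra.
  - intros t y1 y2. unfold G. specialize (HQ t). specialize (Hqt0 t). change (qt t <= Q) in HQ.
    assert (H1 := Hmin y1). assert (H2 := Hmin y2). assert (H3 := Rmin_lip y1 y2 (- del)).
    set (m1 := Rmin y1 (- del)) in *. set (m2 := Rmin y2 (- del)) in *.
    replace (ht t - c - qt t / m1 - (ht t - c - qt t / m2)) with (qt t * (m1 - m2) / (m1 * m2)) by (field; lra).
    rewrite Rabs_div by nra. rewrite Rabs_mult. rewrite (Rabs_pos_eq (qt t)) by lra.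
    rewrite (Rabs_pos_eq (m1 * m2)) by nra.
    assert (del * del <= m1 * m2) by nra.
    assert (0 <= Rabs (m1 - m2)) by apply Rabs_pos.
    apply Rle_trans with (Q * Rabs (y1 - y2) / (del * del)).
    + unfold Rdiv. apply Rmult_le_compat. nra. left; apply Rinv_0_lt_compat; nra.
      apply Rmult_le_compat; lra. apply Rinv_le_contravar; nra.
    + assert (0 <= Rabs (y1 - y2)) by apply Rabs_pos.
      replace (Q * Rabs (y1 - y2) / (del * del)) with (Q / (del * del) * Rabs (y1 - y2)) by (field; lra). nra.
  -
    assert (HG : forall t, 0 < t < 1 -> w t <= - del -> G t (w t) = h t - c - q t / w t).
    { intros t Ht Hwt. unfold G, ht, qt. rewrite clamp_id by lra. rewrite Rmin_left by lra. auto. }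
    assert (HT1 : forall t, phi0 <= t <= 1 -> w t + kap * (t - phi0) <= zs t).
    { set (g := fun t => w t - zs t + kap * (t - phi0)).
      assert (Hgc : cw g phi0 1).
      { apply cw_plus. apply cw_minus. apply cw_of_ctpt; auto. apply (cw_sub zs 0 1); auto; lra.
        apply cw_mult. apply cw_const. apply cw_minus. apply cw_id. apply cw_const. }
      assert (Hneg : forall t, phi0 < t < 1 -> g t < 0).
      { apply barrier; auto. unfold g. rewrite Hw0. lra.
        intros t Ht Hg0. unfold g in Hg0.
        assert (Hzt := Hzn t ltac:(lra)).
        assert (Hwt : w t <= zs t). { assert (0 <= kap * (t - phi0)) by (unfold kap; apply Rmult_le_pos; lra). lra. }
        assert (Hq1 : 0 <= q t) by (apply Hq0; lra).
        set (mt := Rmin (w t) (- del)).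
        assert (Hmt : mt <= zs t). { unfold mt. eapply Rle_trans. apply Rmin_l. auto. }
        exists (G t (w t) - (h t - cs - q t / zs t) + kap * (1 - 0)). split.
        + unfold G, ht, qt. rewrite clamp_id by lra. fold mt.
          assert (mt < 0) by lra.
          assert (q t / zs t <= q t / mt).
          { unfold Rdiv. apply Rmult_le_compat_l; auto. apply inv_le_neg; lra. }
          unfold kap in *. lra.
        + unfold g. apply isd_plus. apply isd_minus. apply Hwd. apply Hzd; lra.
          apply (is_derive_scal (fun t => t - phi0)). apply isd_minus. apply isd_id. apply isd_const. }
      intros t Ht. destruct (Req_dec t phi0) as [->|Hne]. rewrite Hw0. lra.
      assert (g t <= 0). { apply (cw_le_pt g phi0 1 0 t); try lra; auto. intros y Hy; left; auto. }
      unfold g in H. lra. }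
    assert (HT2 : forall t, phi0 <= t <= 1 -> w t < - del).
    { intros t Ht. specialize (HT1 t Ht). destruct (Rle_or_lt t m).
      - assert (zs t <= zsM) by (apply HzsM2; lra).
        assert (0 <= kap * (t - phi0)) by (unfold kap; apply Rmult_le_pos; lra). lra.
      - assert (zs t <= 0). { destruct (Req_dec t 1) as [->|]. lra. left; apply Hzn; unfold m in *; lra. }
        assert (kap * (m - phi0) <= kap * (t - phi0)). { apply Rmult_le_compat_l. unfold kap; lra. lra. }
        lra. }
    assert (HT3 : forall t, a' < t < phi0 -> w t < - del).
    { intros t Ht.
      set (g := fun s => w (- s) + del).
      assert (Hgd : forall s, is_derive g s (- G (- s) (w (- s)))).
      { intros s. unfold g. apply isd_eq with (- G (- s) (w (- s)) + 0). ring.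
        apply isd_plus. apply (isd_refl w s). apply Hwd. apply isd_const. }
      assert (g (- t) < 0).
      { apply (barrier g (- phi0) (- a')). lra.
        apply cw_deriv. intros s _. eexists; apply Hgd.
        unfold g. rewrite Ropp_involutive, Hw0. assert (zs phi0 <= zsM) by (apply HzsM2; unfold m; lra). lra.
        intros s Hs Hg0. exists (- G (- s) (w (- s))). split; auto.
        unfold g in Hg0. assert (Hws : w (- s) = - del) by lra.
        unfold G, ht, qt. rewrite Hws, clamp_id by (unfold a' in *; lra). rewrite Rmin_left by lra.
        assert (Hqs : qm <= q (- s)).
        { unfold qm, qt in Hmq1 |- *. specialize (Hmq1 (- s) ltac:(lra)). rewrite (clamp_id (- s)) in Hmq1 by (unfold a' in *; lra). auto. }
        specialize (HHb (- s)). unfold ht in HHb. rewrite (clamp_id (- s)) in HHb by (unfold a' in *; lra).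
        apply Rabs_le_between in HHb.
        assert (Hq2 : 2 * del * (Hb + 1) <= qm).
        { replace qm with (qm / (Hb+1) * (Hb+1)) by (field; lra). apply Rmult_le_compat_r; lra. }
        assert (qm / del >= 2 * (Hb + 1)).
        { apply Rle_ge. apply Rmult_le_reg_r with del. lra. replace (qm / del * del) with qm by (field; lra). lra. }
        assert (qm / del <= q (- s) / - (- del)).
        { rewrite Ropp_involutive. unfold Rdiv. apply Rmult_le_compat_r; auto. left; apply Rinv_0_lt_compat; lra. }
        replace (q (- s) / - del) with (- (q (- s) / - (- del))) by (field; lra). lra.
        lra. }
      unfold g in H. rewrite Ropp_involutive in H. lra. }
    exists w. split; auto. split; auto. split.
    + intros t Ht. rewrite <- HG. apply Hwd. lra.
      destruct (Rle_or_lt phi0 t). left; apply HT2; lra. left; apply HT3; unfold a'; lra.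
    + intros t Ht. destruct (Rle_or_lt phi0 t). specialize (HT2 t ltac:(lra)); lra.
      specialize (HT3 t ltac:(unfold a'; lra)); lra.
Qed.

Lemma cw_int (z : R -> R) (h q : R -> R) (c u v : R) : 0 < u -> v < 1 ->
  (forall t, 0 < t < 1 -> is_derive z t (h t - c - q t / z t)) -> cw z u v.
Proof.
  intros Hu Hv Hd. apply cw_of_ctpt. intros t Ht. eapply isd_cont. apply Hd. lra.
Qed.

Lemma left_above (h q : R -> R) (c cs : R) (z zs : R -> R) (phi0 : R) :
  cs < c -> ode_sol h q cs zs -> (forall x, 0 <= x <= 1 -> 0 <= q x) -> 0 < phi0 < 1 ->
  (forall t, 0 < t < 1 -> z t < 0) -> (forall t, 0 < t < 1 -> is_derive z t (h t - c - q t / z t)) ->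
  z phi0 = zs phi0 -> forall x, 0 < x < phi0 -> zs x < z x.
Proof.
  intros Hc [Hzc [Hzn Hzd]] Hq0 Hp Hn Hd Heq x Hx.
  apply Rnot_le_lt. intros Hle.
  assert (z phi0 < zs phi0).
  { apply (cmp_cs h q c cs z zs x phi0); auto. lra.
    apply (cw_int z h q c); auto; lra.
    apply (cw_sub zs 0 1); auto; lra.
    intros t Ht. repeat split; try apply Hn; try apply Hzn; try apply Hq0; try apply Hd; try apply Hzd; lra. }
  lra.
Qed.

Lemma right_below (h q : R -> R) (c cs : R) (z zs : R -> R) (phi0 : R) :
  cs < c -> ode_sol h q cs zs -> ode_sol h q c z -> (forall x, 0 <= x <= 1 -> 0 <= q x) -> 0 < phi0 < 1 ->
  z phi0 = zs phi0 -> forall x, phi0 < x <= 1 -> z x < zs x.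
Proof.
  intros Hc [Hzc [Hzn Hzd]] [Hc' [Hn Hd]] Hq0 Hp Heq x Hx.
  apply (cmp_cs h q c cs z zs phi0 x); auto. lra.
  apply (cw_sub z 0 1); auto; lra.
  apply (cw_sub zs 0 1); auto; lra.
  intros t Ht. repeat split; try apply Hn; try apply Hzn; try apply Hq0; try apply Hd; try apply Hzd; lra.
  lra.
Qed.

Lemma zero_at0 (h q : R -> R) (c cs : R) (z zs : R -> R) (phi0 : R) :
  cs < c -> ode_sol h q cs zs -> zs 0 = 0 -> ode_sol h q c z -> (forall x, 0 <= x <= 1 -> 0 <= q x) -> 0 < phi0 < 1 ->
  z phi0 = zs phi0 -> z 0 = 0.
Proof.
  intros Hc Hzs Hzs0 Hz Hq0 Hp Heq.
  assert (Hla := left_above h q c cs z zs phi0 Hc Hzs Hq0 Hp (proj1 (proj2 Hz)) (proj2 (proj2 Hz)) Heq).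
  destruct Hzs as [Hzc _]. destruct Hz as [Hc' [Hn _]].
  assert (H1 : zs 0 - z 0 <= 0).
  { apply (cw_le_pt (fun t => zs t - z t) 0 phi0 0 0). lra.
    apply cw_minus; apply (cw_sub _ 0 1); auto; lra. lra.
    intros y Hy. specialize (Hla y Hy). lra. }
  assert (H2 : z 0 <= 0).
  { apply (cw_le_pt z 0 phi0 0 0). lra. apply (cw_sub _ 0 1); auto; lra. lra.
    intros y Hy. left; apply Hn; lra. }
  lra.
Qed.

Lemma Q_bound (q : R -> R) : cont01 q -> exists Q, forall x, 0 <= x <= 1 -> q x <= Q.
Proof.
  intros Hq. destruct (bound_ext q (fun y => y) Hq) as [Q HQ]. intros; apply continuity_pt_id.
  exists Q. intros x Hx. specialize (HQ x). rewrite clamp_id in HQ; auto.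
Qed.

Lemma uniq01 (h q : R -> R) (c : R) (z w : R -> R) (x0 : R) :
  cont01 q -> (forall x, 0 <= x <= 1 -> 0 <= q x) ->
  ode_sol h q c z -> ode_sol h q c w -> 0 < x0 < 1 -> z x0 = w x0 ->
  forall x, 0 <= x <= 1 -> z x = w x.
Proof.
  intros Hq Hq0 [Hzc [Hzn Hzd]] [Hwc [Hwn Hwd]] Hx0 Heq.
  destruct (Q_bound q Hq) as [Q HQ].
  apply (uniq_gen h q c z w 0 1 Q x0); auto.
  intros x Hx. split. apply Hq0; lra. apply HQ; lra.
Qed.

Lemma existence (h q : R -> R) (c cs : R) (zs : R -> R) (phi0 : R) :
  cont01 h -> cont01 q -> (forall x, 0 < x < 1 -> 0 < q x) -> (forall x, 0 <= x <= 1 -> 0 <= q x) ->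
  ode_sol h q cs zs -> zs 0 = 0 -> zs 1 = 0 -> cs < c -> 0 < phi0 < 1 ->
  exists z, ode_sol h q c z /\ z phi0 = zs phi0.
Proof.
  intros Hh Hq Hqp Hq0 Hzs Hzs0 Hzs1 Hc Hp.
  destruct (Q_bound q Hq) as [Q HQ].
  set (Pa := fun a (w : R -> R) => (forall t, continuity_pt w t) /\ w phi0 = zs phi0 /\
    (forall t, a < t < 1 -> is_derive w t (h t - c - q t / w t)) /\
    (forall t, a < t <= 1 -> w t < 0)).
  assert (Hex : forall a, exists w, 0 < a < phi0 -> Pa a w).
  { intros a. destruct (classic (0 < a < phi0)) as [Ha|Ha].
    - destruct (exist_a h q c cs zs phi0 a Hh Hq Hqp Hq0 Hzs Hzs1 Hc Ha (proj2 Hp)) as [w Hw].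
      exists w; intros _; exact Hw.
    - exists (fun _ => 0). intros H; contradiction. }
  set (W := fun a => proj1_sig (constructive_indefinite_description _ (Hex a))).
  assert (HW : forall a, 0 < a < phi0 -> Pa a (W a)).
  { intros a Ha. exact (proj2_sig (constructive_indefinite_description _ (Hex a)) Ha). }
  assert (Hcons : forall a1 a2 t, 0 < a1 < phi0 -> 0 < a2 < phi0 -> Rmax a1 a2 <= t <= 1 -> W a1 t = W a2 t).
  { intros a1 a2 t H1 H2 Ht.
    destruct (HW a1 H1) as [C1 [E1 [D1 N1]]]. destruct (HW a2 H2) as [C2 [E2 [D2 N2]]].
    assert (Hm1 := Rmax_l a1 a2). assert (Hm2 := Rmax_r a1 a2).
    assert (Hm3 : Rmax a1 a2 < phi0) by (apply Rmax_lub_lt; lra).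
    apply (uniq_gen h q c (W a1) (W a2) (Rmax a1 a2) 1 Q phi0); auto.
    - lra.
    - apply cw_of_ctpt; auto.
    - apply cw_of_ctpt; auto.
    - intros x Hx; apply N1; lra.
    - intros x Hx; apply N2; lra.
    - intros x Hx; apply D1; lra.
    - intros x Hx; apply D2; lra.
    - intros x Hx; split; [apply Hq0|apply HQ]; lra.
    - rewrite E1, E2; auto. }
  set (af := fun x => Rmin x phi0 / 2).
  assert (Haf : forall x, 0 < x -> 0 < af x < phi0 /\ af x <= x / 2).
  { intros x Hx. unfold af. assert (H1 := Rmin_l x phi0). assert (H2 := Rmin_r x phi0).
    assert (0 < Rmin x phi0) by (apply Rmin_pos; lra). lra. }
  set (z := fun x => if Rle_dec x 0 then 0 else W (af x) x).
  assert (Hz_eq : forall x, 0 < x -> z x = W (af x) x).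
  { intros x Hx. unfold z. destruct (Rle_dec x 0); [lra|auto]. }
  assert (Hloc : forall x t, 0 < x -> 0 < t <= 1 -> af x <= t -> z t = W (af x) t).
  { intros x t Hx Ht Hat. rewrite Hz_eq by lra. apply Hcons. apply Haf; lra. apply Haf; lra.
    split; [|lra]. apply Rmax_lub; auto. destruct (Haf t ltac:(lra)); lra. }
  assert (Hneg : forall x, 0 < x < 1 -> z x < 0).
  { intros x Hx. rewrite Hz_eq by lra. destruct (HW (af x) (proj1 (Haf x ltac:(lra)))) as [_ [_ [_ N]]].
    apply N. destruct (Haf x ltac:(lra)); lra. }
  assert (Hder : forall x, 0 < x < 1 -> is_derive z x (h x - c - q x / z x)).
  { intros x Hx. destruct (HW (af x) (proj1 (Haf x ltac:(lra)))) as [_ [_ [D _]]].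
    assert (Hafx := proj2 (Haf x ltac:(lra))).
    rewrite (Hz_eq x) by lra.
    apply (is_derive_ext_loc (W (af x)) z).
    - assert (Hr : 0 < Rmin (x / 2) (1 - x)) by (apply Rmin_pos; lra).
      exists (mkposreal _ Hr). intros t Ht. change (Rabs (t - x) < Rmin (x / 2) (1 - x)) in Ht.
      assert (H1 := Rmin_l (x / 2) (1 - x)). assert (H2 := Rmin_r (x / 2) (1 - x)).
      apply Rabs_def2 in Ht. symmetry. apply Hloc; lra.
    - apply D. lra. }
  assert (Hphi : z phi0 = zs phi0).
  { rewrite Hz_eq by lra. destruct (HW (af phi0) (proj1 (Haf phi0 ltac:(lra)))) as [_ [E _]]. auto. }
  assert (Hla := left_above h q c cs z zs phi0 Hc Hzs Hq0 Hp Hneg Hder Hphi).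
  exists z. split; auto. split; [|split; auto].
  apply cw_of_eps. intros x Hx eps He.
  destruct (Req_dec x 0) as [->|Hx0].
  - destruct Hzs as [Hzc _].
    destruct (cw_eps zs 0 1 0 Hzc ltac:(lra) eps He) as [d [Hd Hd2]].
    exists (Rmin d phi0). split. apply Rmin_pos; lra. intros y Hy Hyd.
    assert (H1 := Rmin_l d phi0). assert (H2 := Rmin_r d phi0).
    assert (Hz0 : z 0 = 0). { unfold z. destruct (Rle_dec 0 0); lra. }
    rewrite Hz0. destruct (Req_dec y 0) as [->|Hy0].
    + rewrite Hz0. replace (0 - 0) with 0 by ring. rewrite Rabs_R0. lra.
    + rewrite Rminus_0_r in Hyd |- *. rewrite Rabs_pos_eq in Hyd by lra.
      specialize (Hd2 y Hy ltac:(rewrite Rminus_0_r, Rabs_pos_eq; lra)).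
      rewrite Hzs0, Rminus_0_r in Hd2.
      specialize (Hla y ltac:(lra)). specialize (Hneg y ltac:(lra)).
      apply Rabs_def2 in Hd2. apply Rabs_def1; lra.
  - destruct (Req_dec x 1) as [->|Hx1].
    + assert (Ha1 := Haf 1 ltac:(lra)).
      destruct (HW (af 1) (proj1 Ha1)) as [C _].
      destruct (ctpt_eps _ 1 (C 1) eps He) as [d [Hd Hd2]].
      exists (Rmin d (1 / 2)). split. apply Rmin_pos; lra. intros y Hy Hyd.
      assert (H1 := Rmin_l d (1/2)). assert (H2 := Rmin_r d (1/2)).
      apply Rabs_def2 in Hyd.
      rewrite (Hloc 1 y) by lra. rewrite (Hz_eq 1) by lra. apply Hd2. apply Rabs_def1; lra.
    + destruct (ctpt_eps z x (isd_cont z x _ (Hder x ltac:(lra))) eps He) as [d [Hd Hd2]].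
      exists d. split; auto.
Qed.

Theorem lemma8p1
  (f h q : R -> R) (c cs : R) (zs : R -> R) (beta : R) (zb : R -> R)
  (* f in C^1[0,1], f(0) = 0, h = f' *)
  (Hf : cont01 f) (Hh : cont01 h)
  (Hfd : forall x, 0 < x < 1 -> is_derive f x (h x))
  (Hf0 : f 0 = 0)
  (Hq : cond_q q)
  (* c* : (P_c') has a solution with z(1)=0 iff c' >= c* *)
  (Hcs : forall c', (exists z, solP h q c' z /\ z 1 = 0) <-> cs <= c')
  (* z* : the solution of (P_{c*}) with z(1)=0 *)
  (Hzs : solP h q cs zs) (Hzs1 : zs 1 = 0)
  (Hc : cs < c)
  (* beta(c) < 0: for b<0, (P_c) has a solution with z(1)=b iff b >= beta(c) *)
  (Hbeta : beta < 0)
  (Hbeta' : forall b, b < 0 -> ((exists z, solP h q c z /\ z 1 = b) <-> beta <= b))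
  (* z_beta *)
  (Hzb : solP h q c zb) (Hzb1 : zb 1 = beta) :
  (forall phi0, 0 < phi0 < 1 ->
     exists z, (ode_sol h q c z /\ z phi0 = zs phi0) /\
       forall w, ode_sol h q c w -> w phi0 = zs phi0 ->
         forall x, 0 <= x <= 1 -> w x = z x)
  /\
  (forall phi0 z, 0 < phi0 < 1 -> ode_sol h q c z -> z phi0 = zs phi0 ->
     z 0 = 0 /\
     (forall x, phi0 < x <= 1 -> z x < zs x) /\
     (forall x, 0 < x <= 1 -> zb x <= z x))
  /\
  (forall phi1 phi0 z1 z0, 0 < phi1 -> phi1 < phi0 -> phi0 < 1 ->
     ode_sol h q c z1 -> z1 phi1 = zs phi1 ->
     ode_sol h q c z0 -> z0 phi0 = zs phi0 ->
     forall x, 0 < x <= 1 -> z1 x < z0 x).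
Proof.
  destruct Hq as [Hqc [Hqp [Hq0' [Hq1' _]]]].
  assert (Hq0 : forall x, 0 <= x <= 1 -> 0 <= q x).
  { intros x Hx. destruct (Req_dec x 0) as [->|]. lra. destruct (Req_dec x 1) as [->|]. lra.
    left; apply Hqp; lra. }
  destruct Hzs as [Hzso Hzs0].
  split; [|split].
  - intros phi0 Hp.
    destruct (existence h q c cs zs phi0 Hh Hqc Hqp Hq0 Hzso Hzs0 Hzs1 Hc Hp) as [z [Hz Hzp]].
    exists z. split; auto. intros w Hw Hwp x Hx.
    apply (uniq01 h q c w z phi0); auto. congruence.
  - intros phi0 z Hp Hz Hzp.
    assert (Hz0 := zero_at0 h q c cs z zs phi0 Hc Hzso Hzs0 Hz Hq0 Hp Hzp).
    assert (Hrb := right_below h q c cs z zs phi0 Hc Hzso Hz Hq0 Hp Hzp).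
    split; auto. split; auto.
    intros x Hx. apply Rnot_lt_le. intros Hlt.
    assert (Hz1 : z 1 < 0). { specialize (Hrb 1 ltac:(lra)). lra. }
    assert (Hb : beta <= z 1). { apply (proj1 (Hbeta' (z 1) Hz1)). exists z. split; auto. split; auto. }
    assert (z 1 < beta).
    { destruct (Req_dec x 1) as [->|Hx1]. lra.
      destruct Hz as [Hzc [Hzn Hzd]]. destruct Hzb as [[Hbc [Hbn Hbd]] _].
      assert (z 1 - zb 1 <= z x - zb x).
      { apply (cmp_same h q c z zb x 1). lra. apply (cw_sub _ 0 1); auto; lra.
        apply (cw_sub _ 0 1); auto; lra.
        intros t Ht. repeat split; try apply Hzn; try apply Hbn; try apply Hq0; try apply Hzd; try apply Hbd; lra.
        auto. }
      lra. }
    lra.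
  - intros phi1 phi0 z1 z0 H1 H2 H3 Hz1 Hz1p Hz0 Hz0p x Hx.
    assert (HA : z1 phi0 < z0 phi0).
    { rewrite Hz0p. apply (right_below h q c cs z1 zs phi1); auto. lra. lra. }
    destruct Hz1 as [C1 [N1 D1]]. destruct Hz0 as [C0 [N0 D0]].
    destruct (Rle_or_lt phi0 x) as [Hge|Hlt].
    + destruct (Req_dec x phi0) as [->|Hne]; auto.
      assert (z1 x - z0 x <= z1 phi0 - z0 phi0).
      { apply (cmp_same h q c z1 z0 phi0 x). lra. apply (cw_sub _ 0 1); auto; lra.
        apply (cw_sub _ 0 1); auto; lra.
        intros t Ht. repeat split; try apply N1; try apply N0; try apply Hq0; try apply D1; try apply D0; lra.
        auto. }
      lra.
    + apply Rnot_le_lt. intros Hle. destruct (Rle_lt_or_eq_dec _ _ Hle) as [Hl|He].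
      * assert (z0 phi0 - z1 phi0 <= z0 x - z1 x).
        { apply (cmp_same h q c z0 z1 x phi0). lra. apply (cw_sub _ 0 1); auto; lra.
          apply (cw_sub _ 0 1); auto; lra.
          intros t Ht. repeat split; try apply N1; try apply N0; try apply Hq0; try apply D1; try apply D0; lra.
          auto. }
        lra.
      * assert (z1 phi0 = z0 phi0).
        { apply (uniq01 h q c z1 z0 x Hqc Hq0 (conj C1 (conj N1 D1)) (conj C0 (conj N0 D0))). lra. auto. lra. }
        lra.
Qed.
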